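(* Let $\mathcal{B}$ be a complete boolean algebra and let $\mathcal{M}$ be a $\mathcal{B}$-valued model (with domain $M$) for a relational language $\mathcal{L}$. Assume that $\mathcal{M}$ satisfies the $\kappa$-mixing property for some cardinal $\kappa\ge\min\{|\mathcal{B}|,|M|\}$. Then $\mathcal{M}$ is full.
   Context: A $\mathcal{B}$-valued model $\mathcal{M}$ for a relational language $\mathcal{L}$ consists of a non-empty set $M$, a map $(\sigma,\tau)\mapsto[\![\sigma=\tau]\!]\in\mathcal{B}$, maps $(\sigma_1,\dots,\sigma_n)\mapsto[\![R(\sigma_1,\dots,\sigma_n)]\!]\in\mathcal{B}$ for each $n$-ary relation symbol $R$, and elements $c^{\mathcal{M}}\in M$ for constants, such that $[\![\sigma=\sigma]\!]=1$, $[\![\sigma=\tau]\!]=[\![\tau=\sigma]\!]$, $[\![\sigma=\tau]\!]\wedge[\![\tau=\pi]\!]\le[\![\sigma=\pi]\!]$ and $\bigwedge_i[\![\sigma_i=\tau_i]\!]\wedge[\![R(\vec\sigma)]\!]\le[\![R(\vec\tau)]\!]$. Since $\mathcal{B}$ is complete, sentences with parameters from $M$ get values in $\mathcal{B}$ via $[\![\varphi\wedge\psi]\!]=[\![\varphi]\!]\wedge[\![\psi]\!]$, $[\![\neg\varphi]\!]=\neg[\![\varphi]\!]$, $[\![\exists x\varphi(x)]\!]=\bigvee_{\tau\in M}[\![\varphi(\tau)]\!]$. For an ultrafilter $G$ on $\mathcal{B}$, $\mathcal{M}/_G$ is the Tarski structure on $\{[\sigma]_G\}$, $[\sigma]_G=\{\tau:[\![\tau=\sigma]\!]\in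 G\}$, with $R([\vec\sigma]_G)$ true iff $[\![R(\vec\sigma)]\!]\in G$ and constants $[c^{\mathcal{M}}]_G$. $\mathcal{M}$ is full if for every ultrafilter $G$, every formula $\phi(x_1,\dots,x_n)$ and all $\tau_i\in M$: $\mathcal{M}/_G\models\phi([\tau_1]_G,\dots,[\tau_n]_G)$ iff $[\![\phi(\tau_1,\dots,\tau_n)]\!]\in G$. $\mathcal{M}$ has the $\kappa$-mixing property if for every antichain $A\subseteq\mathcal{B}$ with $|A|\le\kappa$ and every family $\{\tau_a:a\in A\}\subseteq M$ there exists $\tau\in M$ such that $a\le[\![\tau=\tau_a]\!]$ for every $a\in A$. *)

(* Defs.v *)
(* Boolean algebras are MathComp's ctbDistrLatticeType
   (complemented distributive lattices with top and bottom). *)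
From HB Require Import structures.
From mathcomp Require Import all_boot all_order.
From Stdlib Require Import ClassicalEpsilon.
Set Implicit Arguments. Unset Strict Implicit. Unset Printing Implicit Defensive.
Import Order.Theory.
Local Open Scope order_scope.

Section CBA.
Context {d : Order.disp_t} {B : ctbDistrLatticeType d}.

Definition is_lub (S : B -> Prop) (s : B) : Prop :=
  (forall b, S b -> b <= s) /\ (forall u, (forall b, S b -> b <= u) -> s <= u).

Definition complete : Prop := forall S : B -> Prop, exists s, is_lub S s.

(* the supremum (a chosen least upper bound; meaningful when B is complete) *)
Definition bsup (S : B -> Prop) : B :=
  epsilon (inhabits (\bot : B)) (fun s => is_lub S s).

Definition ultrafilter (G : B -> Prop) : Prop :=
  [/\ G \top, ~ G \bot,
      (forall a b, G a -> a <= b -> G b),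
      (forall a b, G a -> G b -> G (a `&` b)) &
      (forall a, G a \/ G (Order.compl a))].

Definition antichain (A : B -> Prop) : Prop :=
  (forall a, A a -> a != \bot) /\
  (forall a b, A a -> A b -> a <> b -> a `&` b = \bot).
End CBA.

Record lang := Lang {
  rsym : Type;
  arity : rsym -> nat;
  csym : Type }.

Inductive term (L : lang) : Type :=
  | tvar : nat -> term L
  | tcst : csym L -> term L.

Inductive form (L : lang) : Type :=
  | fEq : term L -> term L -> form L
  | fRel : forall r : rsym L, ('I_(arity r) -> term L) -> form L
  | fAnd : form L -> form L -> form L
  | fNeg : form L -> form L
  | fEx : nat -> form L -> form L.   (* fEx i p  =  exists x_i, p *)

Definition upd {T : Type} (v : nat -> T) (i : nat) (t : T) : nat -> T :=
  fun n => if n == i then t else v n.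

Unset Implicit Arguments.
Record bmodel (L : lang) {d : Order.disp_t} (B : ctbDistrLatticeType d) := BModel {
  bdom : Type;
  bdom_ne : inhabited bdom;
  beq : bdom -> bdom -> B;
  brel : forall r : rsym L, ('I_(arity r) -> bdom) -> B;
  bcst : csym L -> bdom;
  beq_refl : forall s, beq s s = \top;
  beq_sym : forall s t, beq s t = beq t s;
  beq_trans : forall s t p, beq s t `&` beq t p <= beq s p;
  brel_cong : forall (r : rsym L) (s t : 'I_(arity r) -> bdom),
      (\meet_(i < arity r) beq (s i) (t i)) `&` brel r s <= brel r t }.
Arguments bdom {L d B}. Arguments beq {L d B}. Arguments brel {L d B}.
Arguments bcst {L d B}.
Set Implicit Arguments.

Section BVal.
Context {L : lang} {d : Order.disp_t} {B : ctbDistrLatticeType d} (M : bmodel L B).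

Definition bterm (v : nat -> bdom M) (t : term L) : bdom M :=
  match t with tvar n => v n | tcst c => bcst M c end.

Fixpoint bval (v : nat -> bdom M) (phi : form L) : B :=
  match phi with
  | fEq t1 t2 => beq M (bterm v t1) (bterm v t2)
  | fRel r ts => brel M r (fun k => bterm v (ts k))
  | fAnd p q => bval v p `&` bval v q
  | fNeg p => Order.compl (bval v p)
  | fEx i p => bsup (fun b => exists t : bdom M, b = bval (upd v i t) p)
  end.

(* kappa-mixing property, the cardinal kappa represented by a type K *)
Definition mixing (K : Type) : Prop :=
  forall A : B -> Prop, antichain A ->
    (exists f : {a | A a} -> K, injective f) ->
    forall tau : {a | A a} -> bdom M,
      exists t : bdom M, forall a : {a | A a}, proj1_sig a <= beq M t (tau a).
End BVal.
Arguments bterm {L d B} M v t. Arguments bval {L d B} M v phi.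
Arguments mixing {L d B} M K.

Unset Implicit Arguments.
Record tstruct (L : lang) := TStruct {
  tdom : Type;
  trel : forall r : rsym L, ('I_(arity r) -> tdom) -> Prop;
  tcstv : csym L -> tdom }.
Arguments tdom {L}. Arguments trel {L}. Arguments tcstv {L}.
Set Implicit Arguments.

Definition tterm L (S : tstruct L) (v : nat -> tdom S) (t : term L) : tdom S :=
  match t with tvar n => v n | tcst c => tcstv S c end.

Fixpoint tsat L (S : tstruct L) (v : nat -> tdom S) (phi : form L) : Prop :=
  match phi with
  | fEq t1 t2 => tterm v t1 = tterm v t2
  | fRel r ts => trel S r (fun k => tterm v (ts k))
  | fAnd p q => tsat v p /\ tsat v q
  | fNeg p => ~ tsat v p
  | fEx i p => exists t : tdom S, tsat (upd v i t) p
  end.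

Section Quot.
Context {L : lang} {d : Order.disp_t} {B : ctbDistrLatticeType d} (M : bmodel L B)
        (G : B -> Prop).

Definition cls (s : bdom M) : bdom M -> Prop := fun t => G (beq M t s).

Definition qdom : Type := { X : bdom M -> Prop | exists s, X = cls s }.

Definition qcls (s : bdom M) : qdom := exist _ (cls s) (ex_intro _ s erefl).

Definition quot : tstruct L :=
  {| tdom := qdom;
     trel := fun r xs => exists ss : 'I_(arity r) -> bdom M,
                (forall k, xs k = qcls (ss k)) /\ G (brel M r ss);
     tcstv := fun c => qcls (bcst M c) |}.
End Quot.
Arguments cls {L d B} M G s. Arguments qdom {L d B} M G.
Arguments qcls {L d B} M G s. Arguments quot {L d B} M G.

Definition full {L : lang} {d : Order.disp_t} {B : ctbDistrLatticeType d}
  (M : bmodel L B) : Prop :=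
  forall G : B -> Prop, ultrafilter G ->
  forall (phi : form L) (v : nat -> bdom M),
    tsat (S := quot M G) (fun n => qcls M G (v n)) phi <-> G (bval M v phi).

(* Main.v *)
Require Import Defs.
From mathcomp Require Import all_boot all_order.
From Stdlib Require Import ClassicalEpsilon Classical FunctionalExtensionality PropExtensionality ProofIrrelevance.
From mathcomp Require boolp classical_sets.
Set Implicit Arguments. Unset Strict Implicit. Unset Printing Implicit Defensive.
Import Order.Theory.
Local Open Scope order_scope.

Section Lat.
Context {d : Order.disp_t} {B : ctbDistrLatticeType d}.
Implicit Types (a b c u : B).

Lemma resid a b c : a `&` b <= c -> b <= ~` a `|` c.
Proof.
move=> H. rewrite -[b]meetx1 -(joinCx a) meetUr.
rewrite leUx; apply/andP; split.
  by apply: le_trans (leIr _ _) _; apply: leUl.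
by rewrite meetC; apply: le_trans H _; apply: leUr.
Qed.

Lemma resid2 a b c : b <= ~` a `|` c -> a `&` b <= c.
Proof.
move=> H. apply: (le_trans (leI2 (lexx a) H)).
by rewrite meetUr meetxC join0x leIr.
Qed.

Lemma meet_sup (S : B -> Prop) s c u : is_lub S s ->
  (forall b, S b -> c `&` b <= u) -> c `&` s <= u.
Proof.
move=> [_ Hl] H; apply: resid2; apply: Hl => b Sb; exact: resid (H b Sb).
Qed.

Lemma bsup_lub (S : B -> Prop) : complete (B := B) -> is_lub S (bsup S).
Proof.
move=> C; rewrite /bsup; apply: (epsilon_spec (inhabits (\bot : B)) (fun s => is_lub S s)).
exact: C.
Qed.

Lemma le_meet_big n (F : 'I_n -> B) c : (forall i, c <= F i) -> c <= \meet_(i < n) F i.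
Proof.
move=> H; apply: (big_ind (fun x => c <= x)) => //.
by move=> x y Hx Hy; rewrite lexI Hx Hy.
Qed.

Lemma uf_meet (G : B -> Prop) a b : ultrafilter G -> G (a `&` b) <-> G a /\ G b.
Proof.
case=> _ _ Hup HI _; split.
  by move=> H; split; [apply: (Hup _ _ H); exact: leIl | apply: (Hup _ _ H); exact: leIr].
by case; apply: HI.
Qed.

Lemma uf_compl (G : B -> Prop) a : ultrafilter G -> G (~` a) <-> ~ G a.
Proof.
move=> U; case: (U) => _ H0 _ HI Hc; split.
  by move=> H1 H2; apply: H0; rewrite -(meetxC a); apply: HI.
by case: (Hc a).
Qed.

Lemma uf_big (G : B -> Prop) n (F : 'I_n -> B) : ultrafilter G ->
  (forall i, G (F i)) -> G (\meet_(i < n) F i).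
Proof.
case=> Ht _ _ HI _ H; apply: (big_ind G) => //.
Qed.
End Lat.
Arguments beq_trans {L d B} b s t p.
Arguments brel_cong {L d B} b r s t.
Arguments beq_refl {L d B} b s.
Arguments beq_sym {L d B} b s t.
Arguments bdom_ne {L d B} b.

Lemma le_tr2 {d : Order.disp_t} {B : porderType d} {x y z : B} : y <= z -> x <= y -> x <= z.
Proof. by move=> H1 H2; apply: le_trans H2 H1. Qed.

Section Model.
Context {L : lang} {d : Order.disp_t} {B : ctbDistrLatticeType d} (M : bmodel L B).

Lemma beq_le_trans s t p c : c <= beq M s t -> c <= beq M t p -> c <= beq M s p.
Proof.
move=> H1 H2; apply: (le_tr2 (beq_trans M s t p)); by rewrite lexI H1 H2.
Qed.

Lemma bterm_cong (v w : nat -> bdom M) c t :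
  (forall n, c <= beq M (v n) (w n)) -> c <= beq M (bterm M v t) (bterm M w t).
Proof. by case: t => [n|k] /= H //; rewrite beq_refl lex1. Qed.

Lemma cong_bval (Cm : complete (B := B)) p : forall (v w : nat -> bdom M) c,
  (forall n, c <= beq M (v n) (w n)) -> c `&` bval M v p <= bval M w p.
Proof.
elim: p => [t1 t2|r ts|p IHp q IHq|p IHp|i p IHp] v w c H /=.
- have H1 := bterm_cong t1 H; have H2 := bterm_cong t2 H.
  apply: (le_tr2 (beq_trans M _ (bterm M v t1) _)).
  rewrite lexI; apply/andP; split.
    by apply: leIxl; rewrite beq_sym.
  apply: (le_tr2 (beq_trans M _ (bterm M v t2) _)).
  rewrite lexI; apply/andP; split; first exact: leIr.
  by apply: leIxl.
- apply: (le_tr2 (brel_cong M r _ _)).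
  apply: leI2 (lexx _); apply: le_meet_big => k; exact: bterm_cong.
- rewrite lexI; apply/andP; split.
    apply: (le_tr2 (IHp v w c H)); apply: leI2 (lexx _) (leIl _ _).
  apply: (le_tr2 (IHq v w c H)); apply: leI2 (lexx _) (leIr _ _).
- have H' : forall n, c <= beq M (w n) (v n) by move=> n; rewrite beq_sym.
  have := IHp w v c H' => Hp.
  rewrite lexC; rewrite -disj_leC; apply/eqP/le_anti; rewrite le0x andbT.
  have -> : bval M w p `&` (c `&` ~` bval M v p) = (c `&` bval M w p) `&` ~` bval M v p.
    by rewrite meetA [bval M w p `&` c]meetC.
  by rewrite -(meetxC (bval M v p)); apply: leI2.
- apply: meet_sup; first exact: bsup_lub.
  move=> b [t ->].
  have [Hu _] := bsup_lub (fun b0 => exists t0, b0 = bval M (upd w i t0) p) Cm.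
  apply: (le_tr2 (Hu _ (ex_intro _ t erefl))).
  apply: IHp => n; rewrite /upd; case: (n == i) => //.
  by rewrite beq_refl lex1.
Qed.

Variable G : B -> Prop.
Hypothesis UG : ultrafilter G.

Lemma sig_eq (T : Type) (P : T -> Prop) (x y : {a | P a}) : proj1_sig x = proj1_sig y -> x = y.
Proof. by case: x => x px; case: y => y py /= E; subst y; f_equal; apply: proof_irrelevance. Qed.

Lemma qcls_eq s t : qcls M G s = qcls M G t <-> G (beq M s t).
Proof.
case: (UG) => Ht _ Hup HI _; split.
  move=> /(f_equal (@proj1_sig _ _)) /= E.
  have : cls M G s s by rewrite /cls beq_refl.
  by rewrite E.
move=> Hst; apply: sig_eq => /=; apply: functional_extensionality => x.
apply: propositional_extensionality; rewrite /cls; split=> Hx.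
  by apply: (Hup _ _ (HI _ _ Hx Hst)); apply: beq_trans.
apply: (Hup _ _ (HI _ _ Hx _)); last exact: (beq_trans M x t s).
by rewrite beq_sym.
Qed.

Lemma qdom_cls (x : qdom M G) : exists s, x = qcls M G s.
Proof.
case: x => X [s E]; exists s; apply: sig_eq => //.
Qed.

Lemma tterm_q (v : nat -> bdom M) t :
  tterm (S := quot M G) (fun n => qcls M G (v n)) t = qcls M G (bterm M v t).
Proof. by case: t. Qed.

End Model.

Section MaxP.
Context {L : lang} {d : Order.disp_t} {B : ctbDistrLatticeType d} (M : bmodel L B) (K : Type).
Hypothesis Cm : complete (B := B).
Hypothesis HK : (exists f : B -> K, injective f) \/ (exists f : bdom M -> K, injective f).
Hypothesis Mx : mixing M K.
Variable f : bdom M -> B.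
Hypothesis fcong : forall s t, beq M s t `&` f t <= f s.

Definition good (A : B -> Prop) := antichain A /\ forall a, A a -> exists m, a <= f m.

Lemma maxp : exists t, forall m, f m <= f t.
Proof.
pose T := {A : B -> Prop | good A}.
pose R (X Y : T) := boolp.asbool (forall b, proj1_sig X b -> proj1_sig Y b).
have [A0 maxA0] : exists t, forall s, R t s -> s = t.
  apply: classical_sets.Zorn.
  - by move=> X; apply/boolp.asboolP.
  - move=> X Y Z /boolp.asboolP H1 /boolp.asboolP H2; apply/boolp.asboolP; auto.
  - move=> X Y /boolp.asboolP H1 /boolp.asboolP H2; apply: sig_eq.
    apply: functional_extensionality => b; apply: propositional_extensionality; split; auto.
  - move=> C Ctot.
    pose U := fun b => exists X, C X /\ proj1_sig X b.
    have gU : good U.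
      split; [split|].
      + by move=> a [X [_ Xa]]; case: (proj2_sig X) => [[Hn _] _]; apply: Hn.
      + move=> a b [X [CX Xa]] [Y [CY Yb]] ab.
        case: (Ctot X Y CX CY) => /boolp.asboolP H.
          by case: (proj2_sig Y) => [[_ Hd] _]; apply: Hd => //; apply: H.
        by case: (proj2_sig X) => [[_ Hd] _]; apply: Hd => //; apply: H.
      + by move=> a [X [_ Xa]]; case: (proj2_sig X) => [_ He]; apply: He.
    exists (exist _ U gU) => X CX; apply/boolp.asboolP => b Xb /=.
    by exists X.
pose A := proj1_sig A0.
have [[An Ad] Af] : good A := proj2_sig A0.
pose tau (a : B) := epsilon (bdom_ne M) (fun m => a <= f m).
have Htau : forall a, A a -> a <= f (tau a).
  by move=> a Aa; apply: (epsilon_spec (bdom_ne M) (fun m => a <= f m)); apply: Af.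
pose bm m := bsup (fun a => A a /\ tau a = m).
have bmL : forall m, is_lub (fun a => A a /\ tau a = m) (bm m) by move=> m; apply: bsup_lub.
have bm_f : forall m, bm m <= f m.
  by move=> m; case: (bmL m) => _ Hl; apply: Hl => a [Aa <-]; apply: Htau.
have a_bm : forall a, A a -> a <= bm (tau a).
  by move=> a Aa; case: (bmL (tau a)) => Hu _; apply: Hu.
have bm_dis : forall m m', m <> m' -> bm m `&` bm m' = \bot.
  move=> m m' mm'; apply/le_anti; rewrite le0x andbT.
  apply: meet_sup => // a' [Aa' ta']; rewrite meetC.
  apply: meet_sup => // a [Aa ta].
  rewrite Ad // => E; apply: mm'; by rewrite -ta -ta' E.
pose A' := fun b => b != \bot /\ exists m, b = bm m.
have A'anti : antichain A'.
  split; first by move=> a [].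
  move=> a b [_ [m ->]] [_ [m' ->]] ne; apply: bm_dis => E; apply: ne; by rewrite E.
pose g (b : {b | A' b}) := epsilon (bdom_ne M) (fun m => proj1_sig b = bm m).
have Hg : forall b, proj1_sig b = bm (g b).
  move=> b; apply: (epsilon_spec (bdom_ne M) (fun m => proj1_sig b = bm m)).
  by case: (proj2_sig b).
have ginj : injective g.
  by move=> b1 b2 E; apply: sig_eq; rewrite Hg E -Hg.
have injK : exists h : {b | A' b} -> K, injective h.
  case: HK => [[h hi]|[h hi]].
    exists (fun b => h (proj1_sig b)) => b1 b2 /hi; exact: sig_eq.
  by exists (fun b => h (g b)) => b1 b2 /hi /ginj.
have [t Ht] := Mx A'anti injK g.
have A'le : forall b, A' b -> b <= f t.
  move=> b Ab; have := Ht (exist _ b Ab) => /= H1.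
  apply: (le_tr2 (fcong t (g (exist _ b Ab)))).
  rewrite lexI H1 /=; have := Hg (exist _ b Ab) => /= E.
  apply: (le_trans _ (bm_f (g (exist _ b Ab)))); by rewrite -E.
have Ale : forall a, A a -> a <= f t.
  move=> a Aa; apply: le_trans (a_bm a Aa) _; apply: A'le; split; last by exists (tau a).
  apply: contra (An a Aa) => /eqP E; apply/eqP/le_anti; rewrite le0x andbT -E.
  exact: a_bm.
exists t => m.
pose c := f m `&` ~` f t.
case: (classic (c = \bot)) => [E|cne].
  have /eqP := E; rewrite disj_leC complK //.
have cdis : forall a, A a -> a `&` c = \bot.
  move=> a Aa; apply/le_anti; rewrite le0x andbT -(meetxC (f t)).
  apply: leI2; first exact: Ale.
  exact: leIr.
pose Y := fun b => A b \/ b = c.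
have gY : good Y.
  split; [split|].
  - by move=> a [Aa|->]; [apply: An | apply/eqP].
  - move=> a b [Aa|->] [Ab|->] ab //.
    + by apply: Ad.
    + by apply: cdis.
    + by rewrite meetC; apply: cdis.
  - move=> a [Aa|->]; first by apply: Af.
    by exists m; apply: leIl.
have EY : exist _ Y gY = A0.
  by apply: maxA0; apply/boolp.asboolP => b /= Ab; left.
have Ac : A c by rewrite /A -EY /=; right.
exfalso; apply: cne; apply/le_anti; rewrite le0x andbT -(meetxC (f t)).
by rewrite lexI Ale //= leIr.
Qed.
End MaxP.

Theorem mainTheorem3 (L : lang) (d : Order.disp_t) (B : ctbDistrLatticeType d)
  (M : bmodel L B) (K : Type) :
  complete (B := B) ->
  ((exists f : B -> K, injective f) \/ (exists f : bdom M -> K, injective f)) ->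
  mixing M K ->
  full M.
Proof.
move=> Cm HK Mx G UG phi.
elim: phi => [t1 t2|r ts|p IHp q IHq|p IHp|i p IHp] v /=.
- by rewrite !tterm_q; apply: qcls_eq.
- split.
    move=> [ss [Hss Gs]].
    case: (UG) => _ _ Hup HI _.
    apply: (Hup _ _ _ (brel_cong M r ss _)); apply: HI => //.
    apply: uf_big => // k; apply/(qcls_eq UG); rewrite -Hss tterm_q //.
  move=> Hr; exists (fun k => bterm M v (ts k)); split => // k; exact: tterm_q.
- by rewrite (uf_meet _ _ UG) IHp IHq.
- by rewrite (uf_compl _ UG) IHp.
- have Hupd : forall s, (fun n => qcls M G (upd v i s n)) = upd (fun n => qcls M G (v n)) i (qcls M G s).
    by move=> s; apply: functional_extensionality => n; rewrite /upd; case: (n == i).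
  have [Hu _] := bsup_lub (fun b => exists t, b = bval M (upd v i t) p) Cm.
  case: (UG) => _ _ Hup _ _.
  split.
    move=> [x Hx]; have [s Es] := qdom_cls x; subst x.
    rewrite -Hupd IHp in Hx.
    by apply: (Hup _ _ Hx); apply: Hu; exists s.
  move=> HG.
  have fc : forall s t, beq M s t `&` bval M (upd v i t) p <= bval M (upd v i s) p.
    move=> s t; apply: cong_bval => // n; rewrite /upd; case: (n == i).
      by rewrite beq_sym.
    by rewrite beq_refl lex1.
  have [t Ht] := maxp Cm HK Mx fc.
  exists (qcls M G t); rewrite -Hupd IHp.
  apply: (Hup _ _ HG).
  case: (bsup_lub (fun b => exists t, b = bval M (upd v i t) p) Cm) => _ Hl.
  by apply: Hl => b [s ->]; apply: Ht.
Qed.
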